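(* Assume (a1)–(a3) with constants $L,\beta$, and suppose in addition that $H$ is twice continuously differentiable with bounded Hessian: there is $M>0$ with $\|\nabla^2H(y)\|_2\le M$ for all $y$. Let $\gamma>0$ and let $\{(x^t,y^t,z^t)\}_{t\ge0}$ be generated by the DYS iteration. Then there exists $\tau>0$ such that for all $t\ge1$, $$\mathrm{dist}\big(0,\partial\Theta_\gamma(x^t,y^t,z^t)\big)\le\tau\,\|y^{t+1}-y^t\|,$$ where $\partial\Theta_\gamma$ is the limiting subdifferential of $\Theta_\gamma$ as a function of $(x,y,z)\in\mathbb{R}^{3n}$.
   Context: Assumptions: (a1) $F:\mathbb{R}^n\to\mathbb{R}$ is differentiable with $L$-Lipschitz gradient; (a2) $G:\mathbb{R}^n\to(-\infty,\infty]$ is proper, lower semicontinuous, and $\arg\min_y\{G(y)+\frac1{2\gamma}\|y-x\|^2\}\neq\emptyset$ for all $x$ and $\gamma>0$; (a3) $H:\mathbb{R}^n\to\mathbb{R}$ is differentiable with $\beta$-Lipschitz gradient. DYS iteration: fix $\gamma>0$, $x^0$; for $t\ge0$, $y^{t+1}\in\arg\min_y\{F(y)+\frac{1}{2\gamma}\|y-x^t\|^2\}$, $z^{t+1}\in\arg\min_z\{G(z)+\frac{1}{2\gamma}\|z-(2y^{t+1}-\gamma\nabla H(y^{t+1})-x^t)\|^2\}$, $x^{t+1}=x^t+(z^{t+1}-y^{t+1})$. Energy function: $\Theta_\gamma(x,y,z)=F(y)+G(z)+H(y)+\tfrac{1}{2\gamma}\|2y-z-x-\gamma\nabla H(y)\|^2-\tfrac{1}{2\gamma}\|x-y+\gamma\nabla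 H(y)\|^2-\tfrac1\gamma\|y-z\|^2$. Limiting subdifferential of a proper $f$ at $x\in\mathrm{dom}f$: $v\in\partial f(x)$ iff there exist $x^k\to x$ with $f(x^k)\to f(x)$ and $v^k\to v$ such that $\liminf_{z\to x^k}\frac{f(z)-f(x^k)-\langle v^k,z-x^k\rangle}{\|z-x^k\|}\ge0$ for each $k$. *)

(* Defs.v *)
From HB Require Import structures.
From mathcomp Require Import all_boot all_order all_algebra.
From mathcomp Require Import all_classical all_reals all_analysis.
From mathcomp Require Import Rstruct Rstruct_topology.
Set Implicit Arguments. Unset Strict Implicit. Unset Printing Implicit Defensive.
Import Order.TTheory GRing.Theory Num.Theory.
Import numFieldNormedType.Exports.
Local Open Scope classical_set_scope.
Local Open Scope ring_scope.

Notation RR := Rdefinitions.R.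
Notation vec n := 'rV[RR]_n.

Definition dotv {n} (u v : vec n) : RR := \sum_(i < n) u 0 i * v 0 i.
Definition enorm {n} (u : vec n) : RR := Num.sqrt (dotv u u).

Definition vec3 n := (vec n * vec n * vec n)%type.
Definition dot3 {n} (u v : vec3 n) : RR :=
  dotv u.1.1 v.1.1 + dotv u.1.2 v.1.2 + dotv u.2 v.2.
Definition enorm3 {n} (u : vec3 n) : RR := Num.sqrt (dot3 u u).
Definition sub3 {n} (u v : vec3 n) : vec3 n :=
  (u.1.1 - v.1.1, u.1.2 - v.1.2, u.2 - v.2).

Definition has_gradient {n} (f : vec n -> RR) (g : vec n -> vec n) : Prop :=
  forall x, differentiable (f : vec n -> RR^o) x /\
    forall v, 'd (f : vec n -> RR^o) x v = dotv (g x) v.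

Definition lipschitz_with {n} (L : RR) (g : vec n -> vec n) : Prop :=
  forall x y, enorm (g x - g y) <= L * enorm (x - y).

(* H is twice continuously differentiable: its gradient gH is differentiable
   everywhere with Hessian matrix hH (i.e. d(gH)(y) v = hH(y) v, written for
   row vectors as v *m (hH y)^T), and hH is continuous. *)
Definition has_cont_hessian {n} (gH : vec n -> vec n) (hH : vec n -> 'M[RR]_n)
  : Prop :=
  (forall y, differentiable gH y /\ forall v, 'd gH y v = v *m (hH y)^T)
  /\ continuous hH.

Definition opnorm2_le {n} (A : 'M[RR]_n) (M : RR) : Prop :=
  forall v : vec n, enorm (v *m A^T) <= M * enorm v.

Local Open Scope ereal_scope.

Definition proper_fn {T} (f : T -> \bar RR) : Prop :=
  (forall x, -oo < f x) /\ (exists x, f x < +oo).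

Definition is_argmin {T} (f : T -> \bar RR) (y : T) : Prop :=
  forall u, f y <= f u.

Definition proxG_obj {n} (G : vec n -> \bar RR) (gamma : RR) (x : vec n) :=
  fun y => G y + ((2 * gamma)^-1 * enorm (y - x) ^+ 2)%R%:E.

Definition DYS_iter {n} (F : vec n -> RR) (G : vec n -> \bar RR)
  (gH : vec n -> vec n) (gamma : RR) (x y z : nat -> vec n) : Prop :=
  forall t : nat,
    is_argmin (fun u => (F u + (2 * gamma)^-1 * enorm (u - x t) ^+ 2)%R%:E)
      (y t.+1)
    /\ is_argmin (proxG_obj G gamma
          (2 *: y t.+1 - gamma *: gH (y t.+1) - x t)%R) (z t.+1)
    /\ x t.+1 = (x t + (z t.+1 - y t.+1))%R.

Definition Theta {n} (F : vec n -> RR) (G : vec n -> \bar RR) (H : vec n -> RR)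
  (gH : vec n -> vec n) (gamma : RR) (w : vec3 n) : \bar RR :=
  let: (x, y, z) := w in
  (F y + H y
   + (2 * gamma)^-1 * enorm (2 *: y - z - x - gamma *: gH y) ^+ 2
   - (2 * gamma)^-1 * enorm (x - y + gamma *: gH y) ^+ 2
   - gamma^-1 * enorm (y - z) ^+ 2)%R%:E + G z.

(* Limiting subdifferential of f : R^{3n} -> \bar R at w (in dom f).
   v \in lim_subdiff f w  iff  f w is finite and there exist w_k -> w with
   f w_k -> f w (finite values) and v_k -> v such that for each k
   liminf_{u -> w_k} (f u - f w_k - <v_k, u - w_k>) / ||u - w_k|| >= 0,
   the liminf condition being written out in epsilon-delta form. *)
Definition lim_subdiff {n} (f : vec3 n -> \bar RR) (w : vec3 n) : set (vec3 n) :=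
  [set v | exists fw : RR, f w = fw%:E /\
    exists (wk : nat -> vec3 n) (fk : nat -> RR) (vk : nat -> vec3 n),
      (fun k => enorm3 (sub3 (wk k) w)) @ \oo --> (0 : RR)%R /\
      (forall k, f (wk k) = (fk k)%:E) /\
      fk @ \oo --> fw /\
      (fun k => enorm3 (sub3 (vk k) v)) @ \oo --> (0 : RR)%R /\
      (forall k (eps : RR), (0 < eps)%R -> exists2 delta : RR, (0 < delta)%R &
         forall u, (0 < enorm3 (sub3 u (wk k)))%R ->
                   (enorm3 (sub3 u (wk k)) < delta)%R ->
           f u - (fk k)%:E - (dot3 (vk k) (sub3 u (wk k)))%:E
             >= (- eps * enorm3 (sub3 u (wk k)))%R%:E)].

(* distance from 0 to a set S of R^{3n}, as an extended real (+oo if S empty) *)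
Definition dist0 {n} (S : set (vec3 n)) : \bar RR :=
  ereal_inf [set (enorm3 v)%:E | v in S].

(* Main.v *)
Require Import Defs.
From HB Require Import structures.
From mathcomp Require Import all_boot all_order all_algebra.
From mathcomp Require Import all_classical all_reals all_analysis.
From mathcomp Require Import Rstruct Rstruct_topology.
From mathcomp Require Import ring lra.
Import Order.TTheory GRing.Theory Num.Theory.
Import numFieldNormedType.Exports.
Local Open Scope classical_set_scope.
Local Open Scope ring_scope.
Local Open Scope ring_scope.
Lemma dotvC {n} (u v : vec n) : dotv u v = dotv v u.
Proof. by apply: eq_bigr => i _; rewrite mulrC. Qed.
Lemma dotvDl {n} (u v w : vec n) : dotv (u + v) w = dotv u w + dotv v w.
Proof. by rewrite /dotv -big_split; apply: eq_bigr => i _; rewrite mxE mulrDl. Qed.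
Lemma dotvZl {n} k (u v : vec n) : dotv (k *: u) v = k * dotv u v.
Proof. by rewrite /dotv mulr_sumr; apply: eq_bigr => i _; rewrite mxE mulrA. Qed.
Lemma dotvNl {n} (u v : vec n) : dotv (- u) v = - dotv u v.
Proof. by rewrite -scaleN1r dotvZl mulN1r. Qed.
Lemma dotvBl {n} (u v w : vec n) : dotv (u - v) w = dotv u w - dotv v w.
Proof. by rewrite dotvDl dotvNl. Qed.
Lemma dotvDr {n} (u v w : vec n) : dotv w (u + v) = dotv w u + dotv w v.
Proof. by rewrite dotvC dotvDl !(dotvC w). Qed.
Lemma dotvZr {n} k (u v : vec n) : dotv v (k *: u) = k * dotv v u.
Proof. by rewrite dotvC dotvZl dotvC. Qed.
Lemma dotvNr {n} (u v : vec n) : dotv v (- u) = - dotv v u.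
Proof. by rewrite dotvC dotvNl dotvC. Qed.
Lemma dotvBr {n} (u v w : vec n) : dotv w (u - v) = dotv w u - dotv w v.
Proof. by rewrite dotvDr dotvNr. Qed.
Lemma dotv0l {n} (v : vec n) : dotv 0 v = 0.
Proof. by rewrite /dotv big1 // => i _; rewrite mxE mul0r. Qed.
Lemma dotv_ge0 {n} (u : vec n) : 0 <= dotv u u.
Proof. by apply: sumr_ge0 => i _; rewrite -expr2 sqr_ge0. Qed.
Lemma enorm_sqr {n} (u : vec n) : enorm u ^+ 2 = dotv u u.
Proof. by rewrite /enorm sqr_sqrtr // dotv_ge0. Qed.
Lemma enorm_ge0 {n} (u : vec n) : 0 <= enorm u.
Proof. exact: sqrtr_ge0. Qed.
Lemma dotv_amgm {n} (t : RR) (a b : vec n) : 0 < t ->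
  2 * dotv a b <= t * dotv a a + t^-1 * dotv b b.
Proof.
move=> t0; rewrite /dotv !mulr_sumr -big_split; apply: ler_sum => i _ /=.
have e : t * (a 0 i * a 0 i) + t^-1 * (b 0 i * b 0 i) - 2 * (a 0 i * b 0 i)
   = t^-1 * (t * a 0 i - b 0 i) ^+ 2 by field; rewrite gt_eqF.
rewrite -subr_ge0 e; apply: mulr_ge0; [by rewrite invr_ge0 ltW | exact: sqr_ge0].
Qed.
Lemma dotv_mxT {n} (v c : vec n) (A : 'M[RR]_n) :
  dotv (v *m A^T) c = dotv (c *m A) v.
Proof.
rewrite /dotv; under eq_bigr do rewrite mxE mulr_suml.
rewrite exchange_big; apply: eq_bigr => j _; rewrite mxE mulr_suml.
by apply: eq_bigr => i _; rewrite !mxE; ring.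
Qed.
Lemma entry_le_norm {n} (v : vec n) i : `|v 0 i| <= `|v|.
Proof.
have -> : `|v| = mx_norm v by [].
rewrite mx_normrE. exact: (le_bigmax _ _ (0, i)).
Qed.
Lemma norm_le_enorm {n} (v : vec n) : `|v| <= enorm v.
Proof.
have -> : `|v| = mx_norm v by [].
rewrite mx_normrE; apply: bigmax_le; first exact: enorm_ge0.
move=> [i j] _ /=; rewrite (ord1 i) -sqrtr_sqr /enorm ler_sqrt ?dotv_ge0 //.
rewrite /dotv (bigD1 j) //= expr2 lerDl; apply: sumr_ge0 => k _.
by rewrite -expr2 sqr_ge0.
Qed.
Lemma sq_expand {n} (p d : vec n) :
  dotv (p + d) (p + d) = dotv p p + 2 * dotv p d + dotv d d.
Proof. rewrite !dotvDl !dotvDr (dotvC d p); ring. Qed.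
Lemma sq_add_le {n} (a b : vec n) :
  dotv (a + b) (a + b) <= 2 * dotv a a + 2 * dotv b b.
Proof.
rewrite sq_expand; have := dotv_amgm 1 a b ltr01; rewrite invr1 !mul1r => h.
lra.
Qed.
Lemma dotv_lb {n} (a b : vec n) : - (dotv a a + dotv b b) <= 2 * dotv a b.
Proof.
have := dotv_amgm 1 (- a) b ltr01; rewrite invr1 !mul1r dotvNl dotvNr dotvNl opprK.
lra.
Qed.
Lemma dotv_abs_le {n} (c r : vec n) :
  `|dotv c r| <= (\sum_(i < n) `|c 0 i|) * `|r|.
Proof.
rewrite /dotv mulr_suml; apply: le_trans (ler_norm_sum _ _ _) _.
apply: ler_sum => i _; rewrite normrM ler_wpM2l //; exact: entry_le_norm.
Qed.
Lemma sqr_le {n} (g h : vec n) (L : RR) : enorm g <= L * enorm h ->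
  dotv g g <= L ^+ 2 * dotv h h.
Proof.
move=> H; rewrite -!enorm_sqr; have := enorm_ge0 g; have := enorm_ge0 h.
nra.
Qed.
Lemma enorm_le_of {n m} (u : vec n) (v : vec m) (K : RR) : 0 <= K ->
  dotv u u <= K ^+ 2 * dotv v v -> enorm u <= K * enorm v.
Proof.
move=> K0 H; rewrite /enorm -(ger0_norm K0) -sqrtr_sqr -sqrtrM ?sqr_ge0 //.
by rewrite ler_sqrt // mulr_ge0 ?sqr_ge0 ?dotv_ge0.
Qed.
Lemma transpose_bound {n} (A : 'M[RR]_n) (M : RR) (c : vec n) : 0 < M ->
  (forall v : vec n, enorm (v *m A^T) <= M * enorm v) ->
  dotv (c *m A) (c *m A) <= M ^+ 2 * dotv c c.
Proof.
move=> M0 H; set w := c *m A.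
have h1 := sqr_le _ _ _ (H w).
have h2 := dotv_amgm (M ^+ 2) c (w *m A^T) (exprn_gt0 2 M0).
rewrite dotvC dotv_mxT -/w in h2.
have h3 : (M ^+ 2)^-1 * dotv (w *m A^T) (w *m A^T) <= dotv w w.
  rewrite -[X in _ <= X](mulKf (x := M ^+ 2)) ?expf_neq0 ?gt_eqF //.
  by rewrite ler_wpM2l // invr_ge0 exprn_ge0 // ltW.
lra.
Qed.

Lemma diff_eps {V W : normedModType RR} (f : V -> W) (x : V) :
  differentiable f x -> forall e : RR, 0 < e ->
  exists2 d : RR, 0 < d & forall h, `|h| < d ->
    `|f (x + h) - f x - 'd f x h| <= e * `|h|.
Proof.
move=> /diff_locally /eqaddoP H e e0.
have := H e e0.
move=> /nbhs_ballP [d d0 Hd]; exists d => // h hd.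
have : ball 0 d h by rewrite -ball_normE /ball_ /= sub0r normrN.
move=> /Hd.
have -> : (f \o shift x - (cst (f x) + 'd f x)) h = f (x + h) - f x - 'd f x h.
  by rewrite !fctE /= [h + x]addrC opprD addrA.
by [].
Qed.
Lemma dotv_eq0 {n} (d : vec n) : dotv d d = 0 -> d = 0.
Proof.
move=> h; apply/rowP => i; rewrite mxE.
have := psumr_eq0P _ h; rewrite /= => /(_ _)/(_ i isT).
have H : forall j : 'I_n, true -> 0 <= d 0 j * d 0 j by move=> j _; rewrite -expr2 sqr_ge0.
by move=> /(_ H) /eqP; rewrite mulf_eq0 orbb => /eqP.
Qed.
Lemma first_order {n} (F : vec n -> RR) (gF : vec n -> vec n) (g : RR)
  (xp y : vec n) : has_gradient F gF -> 0 < g ->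
  is_argmin (fun u => (F u + (2 * g)^-1 * enorm (u - xp) ^+ 2)%:E) y ->
  gF y = g^-1 *: (xp - y).
Proof.
move=> hF g0 amin.
set d := gF y - g^-1 *: (xp - y).
suff : d = 0 by move/eqP; rewrite subr_eq0 => /eqP.
apply: dotv_eq0; set D := dotv d d.
have D0 : 0 <= D := dotv_ge0 d.
rewrite (eqP (_ : D == 0)) //; apply: contraT; rewrite neq_lt ltNge D0 /= => Dp.
have en0 : 0 < enorm d by rewrite /enorm sqrtr_gt0.
have [dF dFe] := hF y.
have [del del0 Hdel] := @diff_eps _ _ _ _ dF (enorm d / 4) ltac:(by rewrite divr_gt0).
set s := Num.min g (del / (2 * (enorm d + 1))).
have s0 : 0 < s by rewrite lt_min g0 divr_gt0 // mulr_gt0 // addr_gt0.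
have sg : s <= g by rewrite ge_min lexx.
have sd : s * enorm d < del.
  apply: (le_lt_trans (y := del / (2 * (enorm d + 1)) * enorm d)).
    by rewrite ler_wpM2r ?enorm_ge0 // ge_min lexx orbT.
  rewrite mulrAC ltr_pdivrMr ?mulr_gt0 ?addr_gt0 //; nra.
set h := - (s *: d).
have hn : `|h| <= s * enorm d.
  apply: (le_trans (norm_le_enorm h)); apply: enorm_le_of; first exact: ltW.
  by rewrite /h dotvNl dotvNr opprK dotvZl dotvZr mulrA -expr2.
have := Hdel h (le_lt_trans hn sd).
rewrite dFe => Hr.
have am := amin (y + h); rewrite lee_fin in am.
have q : enorm (y + h - xp) ^+ 2
    = enorm (y - xp) ^+ 2 - 2 * s * dotv (y - xp) d + s ^+ 2 * D.
  rewrite !enorm_sqr (_ : y + h - xp = (y - xp) + h); last by rewrite addrAC.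
  rewrite sq_expand /h dotvNr dotvNl dotvNr opprK dotvZr dotvZl dotvZr -/D; ring.
rewrite q in am.
have gd : dotv (gF y) d + g^-1 * dotv (y - xp) d = D.
  rewrite -dotvZl -dotvDl; congr dotv; rewrite /d -scalerN opprB //.
have lin : dotv (gF y) h = - s * dotv (gF y) d.
  by rewrite /h dotvNr dotvZr mulNr.
rewrite lin in Hr.
have Hr2 : F (y + h) <= F y - s * dotv (gF y) d + enorm d / 4 * (s * enorm d).
  have h1 := ler_norm (F (y + h) - F y - - s * dotv (gF y) d).
  have h2 : enorm d / 4 * `|h| <= enorm d / 4 * (s * enorm d).
    by rewrite ler_wpM2l // divr_ge0 // enorm_ge0.
  lra.
have ed : enorm d ^+ 2 = D by rewrite enorm_sqr.
have c2 : (2 * g)^-1 * 2 = g^-1 by field; rewrite gt_eqF.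
have e1 : enorm d / 4 * (s * enorm d) = s * (D / 4) by rewrite -ed; ring.
rewrite e1 in Hr2.
have key : s * D <= s * (D / 4) + (2 * g)^-1 * s ^+ 2 * D.
  rewrite -{1}gd; move: am Hr2 c2.
  set c := (2 * g)^-1; set P := dotv (gF y) d; set Q := dotv (y - xp) d.
  move=> am Hr2 c2.
  have : c * s * Q * 2 = s * g^-1 * Q by rewrite -c2; ring.
  lra.
have cs : (2 * g)^-1 * s <= 2^-1.
  have sg1 : s / g <= 1 by rewrite ler_pdivrMr // mul1r.
  have -> : (2 * g)^-1 * s = 2^-1 * (s / g) by field; rewrite gt_eqF.
  lra.
have sD : 0 <= s * D by rewrite mulr_ge0 // ltW.
have cs2 : 0 <= 2^-1 - (2 * g)^-1 * s by rewrite subr_ge0.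
have := mulr_ge0 cs2 sD.
have : 0 < s * D by rewrite mulr_gt0.
move: key; rewrite expr2; lra.
Qed.
Lemma dotv_mxT' {n} (c d : vec n) (A : 'M[RR]_n) :
  dotv (c *m A) d = dotv c (d *m A^T).
Proof. by rewrite -dotv_mxT dotvC. Qed.

Lemma S_identity {n} (F H : vec n -> RR) (gF gH : vec n -> vec n)
  (A : 'M[RR]_n) (g : RR) (X Y Z dx dy dz : vec n) : g != 0 ->
  (F (Y + dy) + H (Y + dy)
   + (2 * g)^-1 * enorm (2 *: (Y + dy) - (Z + dz) - (X + dx) - g *: gH (Y + dy)) ^+ 2
   - (2 * g)^-1 * enorm ((X + dx) - (Y + dy) + g *: gH (Y + dy)) ^+ 2
   - g^-1 * enorm ((Y + dy) - (Z + dz)) ^+ 2)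
  - (F Y + H Y
   + (2 * g)^-1 * enorm (2 *: Y - Z - X - g *: gH Y) ^+ 2
   - (2 * g)^-1 * enorm (X - Y + g *: gH Y) ^+ 2
   - g^-1 * enorm (Y - Z) ^+ 2)
  - (dotv (- g^-1 *: ((2 *: Y - Z - X - g *: gH Y) + (X - Y + g *: gH Y))) dx
     + dotv (gF Y + gH Y + g^-1 *: (2 *: (2 *: Y - Z - X - g *: gH Y)
              + (X - Y + g *: gH Y) - 2 *: (Y - Z)) - (Y - Z) *m A) dy
     + dotv (g^-1 *: (2 *: (Y - Z) - (2 *: Y - Z - X - g *: gH Y))) dz)
  = (F (Y + dy) - F Y - dotv (gF Y) dy) + (H (Y + dy) - H Y - dotv (gH Y) dy)
    - dotv (Y - Z) (gH (Y + dy) - gH Y - dy *m A^T)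
    + (2 * g)^-1 * dotv (2 *: dy - dz - dx - g *: (gH (Y + dy) - gH Y))
                        (2 *: dy - dz - dx - g *: (gH (Y + dy) - gH Y))
    - (2 * g)^-1 * dotv (dx - dy + g *: (gH (Y + dy) - gH Y))
                        (dx - dy + g *: (gH (Y + dy) - gH Y))
    - g^-1 * dotv (dy - dz) (dy - dz).
Proof.
move=> g0.
rewrite !enorm_sqr.
rewrite (_ : 2 *: (Y + dy) - (Z + dz) - (X + dx) - g *: gH (Y + dy)
  = (2 *: Y - Z - X - g *: gH Y) + (2 *: dy - dz - dx - g *: (gH (Y + dy) - gH Y))); last first.
  by apply/rowP => i; rewrite !mxE; ring.
rewrite (_ : (X + dx) - (Y + dy) + g *: gH (Y + dy)
  = (X - Y + g *: gH Y) + (dx - dy + g *: (gH (Y + dy) - gH Y))); last first.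
  by apply/rowP => i; rewrite !mxE; ring.
rewrite (_ : (Y + dy) - (Z + dz) = (Y - Z) + (dy - dz)); last first.
  by apply/rowP => i; rewrite !mxE; ring.
set a := 2 *: Y - Z - X - g *: gH Y.
set b := X - Y + g *: gH Y.
set c := Y - Z.
set da := 2 *: dy - dz - dx - g *: (gH (Y + dy) - gH Y).
set db := dx - dy + g *: (gH (Y + dy) - gH Y).
set dc := dy - dz.
rewrite !sq_expand.
set Qa := dotv a a. set Qb := dotv b b. set Qc := dotv c c.
set Da := dotv da da. set Db := dotv db db. set Dc := dotv dc dc.
rewrite /a /b /c /da /db /dc.
rewrite !(dotvDl, dotvBl, dotvNl) dotv_mxT'.
rewrite !(dotvDl, dotvDr, dotvZl, dotvZr, dotvNl, dotvNr, dotvBl, dotvBr).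
by field.
Qed.
Lemma rem_bound {n} (f : vec n -> RR) (gf : vec n -> vec n) (Y : vec n) e :
  has_gradient f gf -> 0 < e -> exists2 d : RR, 0 < d & forall dy,
   enorm dy < d -> - (e * enorm dy) <= f (Y + dy) - f Y - dotv (gf Y) dy.
Proof.
move=> hf e0; have [df dfe] := hf Y.
have [d d0 Hd] := @diff_eps _ _ _ _ df e e0.
exists d => // dy hdy.
have h1 := Hd dy (le_lt_trans (norm_le_enorm dy) hdy).
rewrite dfe in h1.
have h2 := ler_wpM2l (ltW e0) (norm_le_enorm dy).
have h3 := ler_norm (- (f (Y + dy) - f Y - dotv (gf Y) dy)).
rewrite normrN in h3. lra.
Qed.

Lemma hess_bound {n} (gH : vec n -> vec n) hH (Y c : vec n) e :
  has_cont_hessian gH hH -> 0 < e -> exists2 d : RR, 0 < d & forall dy,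
   enorm dy < d -> `|dotv c (gH (Y + dy) - gH Y - dy *m (hH Y)^T)| <= e * enorm dy.
Proof.
move=> [hh _] e0; have [df dfe] := hh Y.
set Sc := \sum_(i < n) `|c 0 i|.
have Sc0 : 0 <= Sc by apply: sumr_ge0 => i _.
have e20 : 0 < e / (Sc + 1) by rewrite divr_gt0 // ltr_wpDl.
have [d d0 Hd] := @diff_eps _ _ _ _ df _ e20.
exists d => // dy hdy.
have h1 := Hd dy (le_lt_trans (norm_le_enorm dy) hdy).
rewrite dfe in h1.
apply: (le_trans (dotv_abs_le _ _)); rewrite -/Sc.
have h2 := ler_wpM2l (ltW e20) (norm_le_enorm dy).
have h3 : Sc * (e / (Sc + 1)) <= e.
  rewrite mulrA ler_pdivrMr ?ltr_wpDl //; nra.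
have h4 : 0 <= `|gH (Y + dy) - gH Y - dy *m (hH Y)^T| by [].
have h5 := ler_wpM2l Sc0 (le_trans h1 h2).
apply: (le_trans h5); rewrite mulrA; apply: ler_wpM2r; first exact: enorm_ge0.
exact: h3.
Qed.
Lemma error_bound {n} (F H : vec n -> RR) (gF gH : vec n -> vec n) hH
  (g beta : RR) (Y c : vec n) :
  has_gradient F gF -> has_gradient H gH -> has_cont_hessian gH hH ->
  lipschitz_with beta gH -> 0 < g ->
  forall eps : RR, 0 < eps -> exists2 delta : RR, 0 < delta &
  forall dx dy dz : vec n,
   Num.sqrt (dotv dx dx + dotv dy dy + dotv dz dz) < delta ->
   - (eps * Num.sqrt (dotv dx dx + dotv dy dy + dotv dz dz)) <=
     (F (Y + dy) - F Y - dotv (gF Y) dy) + (H (Y + dy) - H Y - dotv (gH Y) dy)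
    - dotv c (gH (Y + dy) - gH Y - dy *m (hH Y)^T)
    + (2 * g)^-1 * dotv (2 *: dy - dz - dx - g *: (gH (Y + dy) - gH Y))
                        (2 *: dy - dz - dx - g *: (gH (Y + dy) - gH Y))
    - (2 * g)^-1 * dotv (dx - dy + g *: (gH (Y + dy) - gH Y))
                        (dx - dy + g *: (gH (Y + dy) - gH Y))
    - g^-1 * dotv (dy - dz) (dy - dz)
    - (2 * g)^-1 * dotv dz dz.
Proof.
move=> hF hHg hHs lip g0 eps e0.
have e10 : 0 < eps / 6 by rewrite divr_gt0.
have [dF dF0 HF] := rem_bound _ _ Y _ hF e10.
have [dH dH0 HH] := rem_bound _ _ Y _ hHg e10.
have [dR dR0 HR] := hess_bound _ _ Y c _ hHs e10.
set k := (2 * g)^-1.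
have k0 : 0 < k by rewrite invr_gt0 mulr_gt0.
set K := k * (4 + 2 * g ^+ 2 * beta ^+ 2) + 2 * g^-1 + k.
have K0 : 0 < K.
  have t1 : 0 <= 4 + 2 * g ^+ 2 * beta ^+ 2.
    have := sqr_ge0 g; have := sqr_ge0 beta; nra.
  have t2 := mulr_ge0 (ltW k0) t1.
  have t3 : 0 < g^-1 by rewrite invr_gt0.
  rewrite /K; lra.
have eK0 : 0 < eps / (2 * K) by rewrite divr_gt0 // mulr_gt0.
exists (Num.min dF (Num.min dH (Num.min dR (eps / (2 * K))))).
  by rewrite !lt_min dF0 dH0 dR0 eK0.
move=> dx dy dz; set N := Num.sqrt _ => hN.
move: hN; rewrite !lt_min => /andP[hNF /andP[hNH /andP[hNR hNK]]].
have Dx0 := dotv_ge0 dx; have Dy0 := dotv_ge0 dy; have Dz0 := dotv_ge0 dz.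
have N0 : 0 <= N := sqrtr_ge0 _.
have N2 : N ^+ 2 = dotv dx dx + dotv dy dy + dotv dz dz by rewrite sqr_sqrtr // !addr_ge0.
have ey : enorm dy <= N by rewrite /enorm /N ler_sqrt ?addr_ge0 //; lra.
have rF := HF dy (le_lt_trans ey hNF).
have rH := HH dy (le_lt_trans ey hNH).
have rR := HR dy (le_lt_trans ey hNR).
have rR' := ler_norm (dotv c (gH (Y + dy) - gH Y - dy *m (hH Y)^T)).
set g2 := gH (Y + dy) - gH Y.
have Lg2 : dotv g2 g2 <= beta ^+ 2 * dotv dy dy.
  apply: sqr_le; rewrite /g2 {2}(_ : dy = (Y + dy) - Y) ?lip //.
  by rewrite addrC addKr.
have Da0 := dotv_ge0 (2 *: dy - dz - dx - g *: g2).
have Db1 := sq_add_le (dx - dy) (g *: g2).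
have Db2 := sq_add_le dx (- dy).
rewrite dotvNl dotvNr opprK in Db2.
rewrite dotvZl dotvZr in Db1.
have Dc1 := sq_add_le dy (- dz).
rewrite dotvNl dotvNr opprK in Dc1.
have Lg2' : g * (g * dotv g2 g2) <= g ^+ 2 * (beta ^+ 2 * dotv dy dy).
  by rewrite mulrA -expr2 ler_wpM2l // sqr_ge0.
have quad : k * dotv (dx - dy + g *: g2) (dx - dy + g *: g2)
   + g^-1 * dotv (dy - dz) (dy - dz) + k * dotv dz dz <= K * N ^+ 2.
  set S := dotv dx dx + dotv dy dy + dotv dz dz.
  have gb : 0 <= g ^+ 2 * beta ^+ 2 by rewrite mulr_ge0 // sqr_ge0.
  have b1 : dotv (dx - dy + g *: g2) (dx - dy + g *: g2) <= (4 + 2 * (g ^+ 2 * beta ^+ 2)) * S.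
    have := mulr_ge0 gb (addr_ge0 Dx0 Dz0).
    move: Db1 Db2 Lg2'; rewrite -/S /S mulrA; lra.
  have b2 : dotv (dy - dz) (dy - dz) <= 2 * S by rewrite /S; lra.
  have b3 : dotv dz dz <= S by rewrite /S; lra.
  have gi : 0 < g^-1 by rewrite invr_gt0.
  have c1 := ler_wpM2l (ltW k0) b1.
  have c2 := ler_wpM2l (ltW gi) b2.
  have c3 := ler_wpM2l (ltW k0) b3.
  rewrite N2 -/S /K; move: c1 c2 c3; rewrite !mulrA; lra.
have m1 : eps / 6 * enorm dy <= eps / 6 * N by rewrite ler_wpM2l // ltW.
have KN : K * N <= eps / 2.
  have := ltW hNK; rewrite ler_pdivlMr ?mulr_gt0 // => h.
  rewrite ler_pdivlMr //; lra.
have KN2 : K * N ^+ 2 <= eps / 2 * N.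
  by rewrite expr2 mulrA ler_wpM2r.
have kDa := mulr_ge0 (ltW k0) Da0.
lra.
Qed.
Lemma rearr (Su Sw r gz a b c d : RR) :
  Su + r - (Sw + gz) - (a + b + (c + d)) = (Su - Sw - (a + b + c)) + (r - gz - d).
Proof. ring. Qed.
Lemma aux_le (E a b : RR) : - a <= b -> E - a <= E + b.
Proof. move=> h; lra. Qed.

Theorem mainTheorem5 (n : nat) (L beta M gamma : RR)
  (F : vec n -> RR) (gF : vec n -> vec n)
  (G : vec n -> \bar RR)
  (H : vec n -> RR) (gH : vec n -> vec n) (hH : vec n -> 'M[RR]_n)
  (x y z : nat -> vec n) :
  (* (a1) *)
  has_gradient F gF -> lipschitz_with L gF ->
  (* (a2) *)
  proper_fn G -> lower_semicontinuous G ->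
  (forall (u : vec n) (g : RR), 0 < g ->
     exists w, is_argmin (proxG_obj G g u) w) ->
  (* (a3) *)
  has_gradient H gH -> lipschitz_with beta gH ->
  (* H is C^2 with bounded Hessian *)
  has_cont_hessian gH hH -> 0 < M -> (forall u, opnorm2_le (hH u) M) ->
  (* DYS iteration *)
  0 < gamma -> DYS_iter F G gH gamma x y z ->
  exists2 tau : RR, 0 < tau &
    forall t : nat, (1 <= t)%N ->
      (dist0 (lim_subdiff (Theta F G H gH gamma) (x t, y t, z t))
         <= (tau * enorm (y t.+1 - y t))%:E)%E.
Proof.
move=> hF lipF [Gninf [u0 Gu0]] _ _ hHg lipH hHs M0 hM g0 dys.
set K2 := (4 * (gamma^-1) ^+ 2 + 2 * M ^+ 2) * (2 * gamma ^+ 2 * L ^+ 2 + 2).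
have K20 : 0 < K2.
  have h1 : 0 < M ^+ 2 by rewrite exprn_gt0.
  have h2 := sqr_ge0 (gamma^-1); have h3 := sqr_ge0 gamma; have h4 := sqr_ge0 L.
  have h5 := mulr_ge0 h3 h4.
  apply: mulr_gt0; lra.
exists (Num.sqrt K2); first by rewrite sqrtr_gt0.
case=> [//|s] _.
have [amY [amZ eX]] := dys s.
have [amY2 _] := dys s.+1.
have fo1 := first_order _ _ _ _ _ hF g0 amY.
have fo2 := first_order _ _ _ _ _ hF g0 amY2.
move: amY amY2 amZ eX fo1 fo2.
set X := x s.+1; set Y := y s.+1; set Z := z s.+1; set Xp := x s; set Y2 := y s.+2.
set p := 2 *: Y - gamma *: gH Y - Xp.
move=> _ _ amZ eX fo1 fo2.
have [gz GZ] : exists gz, G Z = gz%:E.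
  move: (amZ u0) (Gninf Z); rewrite /proxG_obj.
  case: (G Z) => [r| |] // h _; first by exists r.
  exfalso; move: h; rewrite addye // leye_eq => /eqP h.
  by have := lte_add_pinfty Gu0 (ltry ((2 * gamma)^-1 * enorm (u0 - p) ^+ 2)); rewrite -h ltxx.
pose vx := - gamma^-1 *: ((2 *: Y - Z - X - gamma *: gH Y) + (X - Y + gamma *: gH Y)).
pose vy := gF Y + gH Y + gamma^-1 *: (2 *: (2 *: Y - Z - X - gamma *: gH Y)
   + (X - Y + gamma *: gH Y) - 2 *: (Y - Z)) - (Y - Z) *m hH Y.
pose vz := gamma^-1 *: (2 *: (Y - Z) - (2 *: Y - Z - X - gamma *: gH Y))
   + gamma^-1 *: (p - Z).
pose v : vec3 n := (vx, vy, vz).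
pose Sw := F Y + H Y
   + (2 * gamma)^-1 * enorm (2 *: Y - Z - X - gamma *: gH Y) ^+ 2
   - (2 * gamma)^-1 * enorm (X - Y + gamma *: gH Y) ^+ 2
   - gamma^-1 * enorm (Y - Z) ^+ 2.
have sub0 : forall w : vec3 n, enorm3 (sub3 w w) = 0.
  move=> [[a b] c]; rewrite /enorm3 /sub3 /dot3 /= !subrr !dotv0l !addr0.
  exact: sqrtr0.
have mem : lim_subdiff (Theta F G H gH gamma) (X, Y, Z) v.
  exists (Sw + gz); split; first by rewrite /Theta GZ.
  exists (fun=> (X, Y, Z)), (fun=> Sw + gz), (fun=> v).
  split; first by rewrite sub0; exact: cvg_cst.
  split; first by move=> _; rewrite /Theta GZ.
  split; first exact: cvg_cst.
  split; first by rewrite sub0; exact: cvg_cst.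
  move=> _ eps e0.
  have [del del0 Hd] := error_bound _ _ _ _ _ _ _ Y (Y - Z) hF hHg hHs lipH g0 eps e0.
  exists del => // -[[ux uy] uz].
  rewrite /sub3 /enorm3 /dot3 /= => Npos Nlt.
  set dx := ux - X; set dy := uy - Y; set dz := uz - Z.
  have ex : ux = X + dx by rewrite /dx addrC subrK.
  have ey : uy = Y + dy by rewrite /dy addrC subrK.
  have ez : uz = Z + dz by rewrite /dz addrC subrK.
  have pz := amZ uz; rewrite /proxG_obj GZ in pz.
  rewrite /Theta.
  case hG: (G uz) => [r| |]; last by have := Gninf uz; rewrite hG.
    rewrite hG -EFinD lee_fin in pz.
    rewrite -EFinD lee_fin.
    have I := S_identity F H gF gH (hH Y) gamma X Y Z dx dy dz (lt0r_neq0 g0).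
    have B := Hd dx dy dz Nlt.
    have ezp : Z + dz - p = (Z - p) + dz by rewrite addrAC.
    rewrite ez ezp !enorm_sqr (sq_expand (Z - p) dz) in pz.
    have e1 : dotv (p - Z) dz = - dotv (Z - p) dz by rewrite -dotvNl opprB.
    have e2 : (2 * gamma)^-1 * 2 = gamma^-1 by field; rewrite gt_eqF.
    rewrite ex ey ez /vz [dotv (_ + gamma^-1 *: (p - Z)) dz]dotvDl [dotv (gamma^-1 *: (p - Z)) dz]dotvZl e1.
    rewrite /Sw in I *; rewrite /vx /vy.
    move: I B pz e2.
    set k := (2 * gamma)^-1.
    set Qz := dotv (Z - p) (Z - p).
    set Pz := dotv (Z - p) dz.
    move=> I B pz e2.
    have e3 : k * (2 * Pz) = gamma^-1 * Pz by rewrite -e2; ring.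
    rewrite rearr I mulNr; apply: le_trans B _; apply: aux_le.
    lra.
  by rewrite addey // addye //= ?leey.
rewrite /dist0; apply: le_trans; first by apply: ereal_inf_lbound; exists v.
rewrite lee_fin.
have gn0 : gamma != 0 by rewrite gt_eqF.
have hvx : vx = - gamma^-1 *: (Y - Z).
  by rewrite /vx; apply/rowP => i; rewrite !mxE; ring.
have hvy : vy = gamma^-1 *: (Y - Z) - (Y - Z) *m hH Y.
  rewrite /vy; congr (_ - _); rewrite fo1 eX; apply/rowP => i; rewrite !mxE.
  by field.
have hvz : vz = gamma^-1 *: (Y - Z).
  by rewrite /vz /p eX; apply/rowP => i; rewrite !mxE; field.
have hc : Y - Z = - (gamma *: (gF Y2 - gF Y) + (Y2 - Y)).
  by rewrite fo1 fo2 eX; apply/rowP => i; rewrite !mxE; field.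
set c := Y - Z in hvx hvy hvz hc.
set Dc := dotv c c.
set Dd := dotv (Y2 - Y) (Y2 - Y).
have Dc0 : 0 <= Dc := dotv_ge0 c.
have Dd0 : 0 <= Dd := dotv_ge0 _.
have Ex : dotv vx vx = gamma^-1 ^+ 2 * Dc.
  by rewrite hvx dotvZl dotvZr expr2 -/Dc; ring.
have Ez : dotv vz vz = gamma^-1 ^+ 2 * Dc.
  by rewrite hvz dotvZl dotvZr expr2 -/Dc; ring.
have Ey : dotv vy vy <= 2 * (gamma^-1 ^+ 2 * Dc) + 2 * (M ^+ 2 * Dc).
  rewrite hvy; have h1 := sq_add_le (gamma^-1 *: c) (- (c *m hH Y)).
  rewrite dotvNl dotvNr opprK dotvZl dotvZr in h1.
  have h2 := transpose_bound _ _ c M0 (hM Y).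
  move: h1 h2; rewrite -/Dc expr2; lra.
have EDc : Dc <= (2 * gamma ^+ 2 * L ^+ 2 + 2) * Dd.
  rewrite /Dc hc dotvNl dotvNr opprK.
  have h1 := sq_add_le (gamma *: (gF Y2 - gF Y)) (Y2 - Y).
  rewrite dotvZl dotvZr in h1.
  have h2 := sqr_le _ _ _ (lipF Y2 Y).
  have h3 : gamma * (gamma * dotv (gF Y2 - gF Y) (gF Y2 - gF Y))
     <= gamma ^+ 2 * (L ^+ 2 * Dd).
    by rewrite mulrA -expr2 ler_wpM2l ?sqr_ge0.
  move: h1 h3; rewrite -/Dd; lra.
have S : dot3 v v <= K2 * Dd.
  rewrite /dot3 /= Ex Ez.
  have A0 : 0 <= 4 * gamma^-1 ^+ 2 + 2 * M ^+ 2.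
    by have := sqr_ge0 (gamma^-1); have := sqr_ge0 M; lra.
  have := ler_wpM2l A0 EDc; rewrite /K2 -mulrA.
  move: Ey; lra.
rewrite /enorm3 /enorm -sqrtrM; last exact: ltW K20.
by rewrite ler_sqrt // mulr_ge0 // ltW.
Qed.
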